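(* The optimal variational distributions of the E-step problem are $$q_d^*(x'|x,a)=\frac{p(x'|x,a)\exp(V_\pi(x'))}{\exp\big(Q_\pi(x,a)-\eta\, r(x,a)\big)},\qquad q_c^*(a|x)=\frac{\pi(a|x)\exp(Q_\pi(x,a))}{\exp(V_\pi(x))},$$ for all $x,x'\in\mathcal X$, $a\in\mathcal A$, where $Q_\pi(x,a):=\eta\, r(x,a)+\log\mathbb E_{x'\sim p(\cdot|x,a)}[\exp(V_\pi(x'))]$.
   Context: Setting: a Markov decision process with finite state space $\mathcal X$, action space $\mathcal A$, reward $r$, transition kernel $p(\cdot|x,a)$, initial distribution $p_0$; $\mathcal X^0$ is the set of terminal states, trajectories stop at the hitting time $T$ of $\mathcal X^0$, and a terminal state is reached with probability one under every policy. A baseline policy $\pi$ and temperature $\eta>0$ are fixed. The E-step problem is $$(q_c^*,q_d^* )\in\arg\max_{q_c,q_d}\mathbb E\Big[\sum_{t=0}^{T-1}\eta\, r(x_t,a_t)-\log\frac{q_c(a_t|x_t)}{\pi(a_t|x_t)}-\log\frac{q_d(x_{t+1}|x_t,a_t)}{p(x_{t+1}|x_t,a_t)}\,\Big|\,p_0,q_d,q_c\Big]$$ over policies $q_c$ and transition kernels $q_d$, trajectories generated by $a_t\sim q_c(\cdot|x_t)$, $x_{t+1}\sim q_d(\cdot|x_t,a_t)$. The E-step optimal value function $V_\pi(x)$ is this expected sum under $(q_c^*,q_d^* )$ from $x_0=x$, with $V_\pi=0$ on $\mathcal X^0$. *)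

(* Defs.v *)
From HB Require Import structures.
From mathcomp Require Import all_boot all_order all_algebra.
From mathcomp Require Import all_classical all_reals all_analysis.
Set Implicit Arguments. Unset Strict Implicit. Unset Printing Implicit Defensive.
Import Order.TTheory GRing.Theory Num.Theory.
Local Open Scope ring_scope.
Local Open Scope classical_set_scope.
Import numFieldNormedType.Exports.

Section EStep.
Variables (R : realType) (X A : finType).

Definition is_dist (T : finType) (d : T -> R) :=
  (forall t, 0 <= d t) /\ \sum_(t : T) d t = 1.

Definition is_policy (q : X -> A -> R) := forall x, is_dist (q x).
Definition is_kernel (q : X -> A -> X -> R) := forall x a, is_dist (q x a).

Variable X0 : {set X}.  (* terminal states *)

(* survival n x = P(T > n) when starting from x_0 = x, trajectories generated
   by a_t ~ qc(.|x_t), x_{t+1} ~ qd(.|x_t,a_t), stopped at hitting time T of X0 *)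
Fixpoint survival (qc : X -> A -> R) (qd : X -> A -> X -> R) (n : nat) (x : X)
  : R :=
  if x \in X0 then 0 else
  match n with
  | 0 => 1
  | n'.+1 => \sum_(a : A) \sum_(x' : X) qc x a * qd x a x' * survival qc qd n' x'
  end.

Definition terminates qc qd :=
  forall x : X, (fun n => survival qc qd n x) @ \oo --> (0 : R)%R.

Variables (p : X -> A -> X -> R) (pi : X -> A -> R) (r : X -> A -> R) (eta : R).

(* expected value of the E-step objective truncated at time min(T, n) *)
Fixpoint trunc_obj (qc : X -> A -> R) (qd : X -> A -> X -> R) (n : nat) (x : X)
  : R :=
  if x \in X0 then 0 else
  match n with
  | 0 => 0
  | n'.+1 => \sum_(a : A) \sum_(x' : X) qc x a * qd x a x' *
      (eta * r x a - ln (qc x a / pi x a) - ln (qd x a x' / p x a x')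
       + trunc_obj qc qd n' x')
  end.

(* E[ sum_{t<T} eta r - log(qc/pi) - log(qd/p) | x_0 = x, qd, qc ] *)
Definition estep_obj qc qd (x : X) : R := limn (fun n => trunc_obj qc qd n x).

(* admissible pairs: distributions, finite KL terms along the trajectory
   (absolute continuity where used), and almost-sure termination *)
Definition admissible qc qd :=
  [/\ is_policy qc, is_kernel qd,
      (forall x a, x \notin X0 -> 0 < qc x a -> 0 < pi x a),
      (forall x a x', x \notin X0 -> 0 < qc x a -> 0 < qd x a x' -> 0 < p x a x')
    & terminates qc qd].

Definition estep_optimal qc qd :=
  admissible qc qd /\
  forall qc' qd', admissible qc' qd' -> forall x, estep_obj qc' qd' x <= estep_obj qc qd x.

End EStep.

(* Main.v *)
Require Import Defs.
From HB Require Import structures.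
From mathcomp Require Import all_boot all_order all_algebra.
From mathcomp Require Import all_classical all_reals all_analysis.
From mathcomp Require Import lra.
Import Order.TTheory GRing.Theory Num.Theory.
Import numFieldNormedType.Exports.
Local Open Scope ring_scope.
Local Open Scope classical_set_scope.

Lemma cvg_from_bound (R : realType) (u e : nat -> R) :
  (forall n m, `|u (n + m)%N - u n| <= e n) ->
  (forall eps, 0 < eps -> exists N, e N < eps) ->
  cvgn u /\ forall n, `|limn u - u n| <= e n.
Proof.
move=> H He.
have cu : cvgn u.
  apply/cauchy_cvgP/cauchyP => eps eps0.
  have [N HN] := He _ eps0.
  exists (u N) => /=.
  exists N => // n /= Nn.
  rewrite -ball_normE /ball_ /=.
  rewrite -(subnKC Nn) distrC.
  exact: le_lt_trans (H _ _) HN.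
split => // n.
have nb : \forall k \near \oo, `|u k - u n| <= e n.
  exists n => // k /= nk; rewrite -(subnKC nk); exact: H.
rewrite ler_norml; apply/andP; split.
  rewrite lerBrDl; apply: limr_ge => //.
  apply: filterS nb => k; rewrite ler_norml => /andP[h1 _] /=; lra.
rewrite lerBlDl; apply: limr_le => //.
apply: filterS nb => k; rewrite ler_norml => /andP[_ h2] /=; lra.
Qed.

Lemma zero_of_bound (R : realType) (e : nat -> R) (a : R) :
  (forall eps, 0 < eps -> exists N, e N < eps) ->
  (forall n, `|a| <= 2 * e n) -> a = 0.
Proof.
move=> He Ha; apply/eqP; apply: contraT => a0.
have pa : 0 < `|a| / 4 by rewrite divr_gt0 // normr_gt0.
have [N HN] := He _ pa; have := Ha N; lra.
Qed.

Section Gen.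
Variables (R : realType) (X A : finType) (X0 : {set X}).
Variables (qc : X -> A -> R) (qd : X -> A -> X -> R).
Hypotheses (hc : is_policy qc) (hd : is_kernel qd).

Definition avg (F : A -> X -> R) (x : X) :=
  \sum_(a : A) \sum_(x' : X) qc x a * qd x a x' * F a x'.

Lemma w_ge0 x a x' : 0 <= qc x a * qd x a x'.
Proof. by rewrite mulr_ge0 //; [case: (hc x) | case: (hd x a)]. Qed.

Lemma avg_le F G x : (forall a y, F a y <= G a y) -> avg F x <= avg G x.
Proof.
move=> H; apply: ler_sum => a _; apply: ler_sum => y _.
by apply: ler_wpM2l; [exact: w_ge0 | exact: H].
Qed.

Lemma avg_cst k x : avg (fun _ _ => k) x = k.
Proof.
rewrite /avg.
under eq_bigr => a _ do rewrite -big_distrl /= -big_distrr /= (proj2 (hd x a)) mulr1.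
by rewrite -big_distrl /= (proj2 (hc x)) mul1r.
Qed.

Lemma avgD F G x : avg (fun a y => F a y + G a y) x = avg F x + avg G x.
Proof.
rewrite /avg -big_split; apply: eq_bigr => a _ /=.
by rewrite -big_split; apply: eq_bigr => y _; rewrite mulrDr.
Qed.

Lemma avgN F x : avg (fun a y => - F a y) x = - avg F x.
Proof.
rewrite /avg -sumrN; apply: eq_bigr => a _ /=.
by rewrite -sumrN; apply: eq_bigr => y _; rewrite mulrN.
Qed.

Lemma avgB F G x : avg (fun a y => F a y - G a y) x = avg F x - avg G x.
Proof. by rewrite avgD avgN. Qed.

Lemma avgZ k F x : avg (fun a y => k * F a y) x = k * avg F x.
Proof.
rewrite /avg big_distrr; apply: eq_bigr => a _ /=.
by rewrite big_distrr; apply: eq_bigr => y _ /=; rewrite mulrCA.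
Qed.

Lemma avg_norm F x : `|avg F x| <= avg (fun a y => `|F a y|) x.
Proof.
rewrite /avg; apply: le_trans (ler_norm_sum _ _ _) _.
apply: ler_sum => a _; apply: le_trans (ler_norm_sum _ _ _) _.
apply: ler_sum => y _; rewrite normrM ger0_norm //; exact: w_ge0.
Qed.

Notation S := (survival X0 qc qd).

Lemma S_in n x : x \in X0 -> S n x = 0.
Proof. by case: n => [|n] /= ->. Qed.

Lemma S_0 x : x \notin X0 -> S 0 x = 1.
Proof. by move=> /negbTE /= ->. Qed.

Lemma S_S n x : x \notin X0 -> S n.+1 x = avg (fun _ y => S n y) x.
Proof. by move=> /negbTE /= ->. Qed.

Lemma S_ge0 n x : 0 <= S n x.
Proof.
elim: n x => [|n IH] x; case: (boolP (x \in X0)) => hx.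
- by rewrite S_in.
- by rewrite S_0.
- by rewrite S_in.
rewrite S_S // -(avg_cst 0 x); exact: avg_le.
Qed.

Lemma S_le1 n x : S n x <= 1.
Proof.
elim: n x => [|n IH] x; case: (boolP (x \in X0)) => hx.
- by rewrite S_in.
- by rewrite S_0.
- by rewrite S_in.
rewrite S_S // -(avg_cst 1 x); exact: avg_le.
Qed.

Lemma S_submult n m c x : (forall y, S m y <= c) -> S (n + m) x <= c * S n x.
Proof.
move=> Hc; elim: n x => [|n IH] x; case: (boolP (x \in X0)) => hx.
- by rewrite !S_in // mulr0.
- by rewrite add0n S_0 // mulr1.
- by rewrite !S_in // mulr0.
rewrite addSn !S_S // -avgZ; exact: avg_le.
Qed.

Lemma S_mono n m x : S (n + m) x <= S n x.
Proof. by rewrite -[leRHS]mul1r; apply: S_submult => y; exact: S_le1. Qed.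

Lemma S_mono' n m x : (n <= m)%N -> S m x <= S n x.
Proof. by move=> /subnKC <-; exact: S_mono. Qed.

Lemma S_geom N rho k x : (forall y, S N y <= rho) -> S (k * N) x <= rho ^+ k.
Proof.
move=> H; elim: k x => [|k IH] x; first by rewrite mul0n expr0 S_le1.
have rho0 : 0 <= rho by apply: le_trans (H x); exact: S_ge0.
rewrite mulSn addnC; apply: le_trans (S_submult (k * N) N rho x H) _.
by rewrite exprS; apply: ler_wpM2l.
Qed.


Definition unif_term := forall d, 0 < d -> exists N, forall y, S N y <= d.

Fixpoint tobj (c : X -> A -> X -> R) (n : nat) (x : X) : R :=
  if x \in X0 then 0 else
  match n with
  | 0 => 0
  | n'.+1 => \sum_(a : A) \sum_(x' : X) qc x a * qd x a x' * (c x a x' + tobj c n' x')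
  end.

Lemma T_in c n x : x \in X0 -> tobj c n x = 0.
Proof. by case: n => [|n] /= ->. Qed.

Lemma T_0 c x : tobj c 0 x = 0.
Proof. by rewrite /=; case: ifP. Qed.

Lemma T_S c n x : x \notin X0 -> tobj c n.+1 x = avg (fun a y => c x a y + tobj c n y) x.
Proof. by move=> /negbTE /= ->. Qed.

Lemma T_diff c n m B x : (forall y, `|tobj c m y| <= B) ->
  `|tobj c (n + m) x - tobj c n x| <= B * S n x.
Proof.
move=> HB; elim: n x => [|n IH] x; case: (boolP (x \in X0)) => hx.
- by rewrite !T_in // !S_in // subrr normr0 mulr0.
- by rewrite add0n T_0 subr0 S_0 // mulr1.
- by rewrite !T_in // !S_in // subrr normr0 mulr0.
rewrite addSn !T_S // -avgB S_S // -avgZ; apply: le_trans (avg_norm _ _) _.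
apply: avg_le => a y /=; rewrite opprD addrACA subrr add0r; exact: IH.
Qed.

Lemma le_sum1g (I : finType) (F : I -> R) y : (forall z, 0 <= F z) -> F y <= \sum_z F z.
Proof.
move=> H; rewrite (bigD1 y) //= lerDl; apply: sumr_ge0 => z _; exact: H.
Qed.

Lemma le_sum1 (F : X -> R) y : (forall z, 0 <= F z) -> F y <= \sum_z F z.
Proof.
move=> H; rewrite (bigD1 y) //= lerDl; apply: sumr_ge0 => z _; exact: H.
Qed.

Notation T1 := (tobj (fun _ _ _ => 1)).

Lemma T1_ge0 n x : 0 <= T1 n x.
Proof.
elim: n x => [|n IH] x; first by rewrite T_0.
case: (boolP (x \in X0)) => hx; first by rewrite T_in.
rewrite T_S // -(avg_cst 0 x); apply: avg_le => a y.
by apply: addr_ge0.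
Qed.

Lemma T1_le n x : T1 n x <= n%:R.
Proof.
elim: n x => [|n IH] x; first by rewrite T_0.
case: (boolP (x \in X0)) => hx; first by rewrite T_in.
rewrite T_S // -(avg_cst n.+1%:R x); apply: avg_le => a y.
by rewrite -addn1 natrD addrC lerD2r.
Qed.

Lemma T1_mono1 n x : T1 n x <= T1 n.+1 x.
Proof.
elim: n x => [|n IH] x; first by rewrite T_0 T1_ge0.
case: (boolP (x \in X0)) => hx; first by rewrite !T_in.
rewrite !T_S //; apply: avg_le => a y; by rewrite lerD2l.
Qed.

Lemma T1_mono n m x : T1 m x <= T1 (n + m) x.
Proof.
elim: n => [|n IH] //; apply: le_trans IH _; rewrite addSn; exact: T1_mono1.
Qed.

Lemma T1_bound : unif_term -> exists C, 0 <= C /\ forall m x, T1 m x <= C.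
Proof.
move=> ut.
pose d : R := (2 * (#|X|%:R + 1))^-1.
have d0 : 0 < d by rewrite invr_gt0 mulr_gt0 // ltr_wpDl.
have [N HN] := ut d d0.
have Xd : #|X|%:R * d <= 2^-1.
  rewrite /d invfM mulrCA ger_pMr ?invr_gt0 // ler_pdivrMr ?ltr_wpDl //.
  by rewrite mul1r lerDl.
exists (2 * (#|X|%:R * N%:R)); split; first by rewrite !mulr_ge0.
move=> m x.
pose Sm := \sum_y T1 m y.
have Sm0 : 0 <= Sm by apply: sumr_ge0 => y _; exact: T1_ge0.
have H1 : Sm <= #|X|%:R * N%:R + Sm * 2^-1.
  apply: le_trans (_ : \sum_y T1 (N + m) y <= _).
    by apply: ler_sum => y _; exact: T1_mono.
  apply: le_trans (_ : \sum_y (N%:R + Sm * S N y) <= _).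
    apply: ler_sum => y _.
    have HB : forall z, `|T1 m z| <= Sm.
      by move=> z; rewrite ger0_norm ?T1_ge0 //; apply: le_sum1 => w; exact: T1_ge0.
    have := T_diff (fun _ _ _ => 1) N m Sm y HB.
    have := T1_le N y.
    move=> h1 h2; have h3 := ler_norm (T1 (N + m) y - T1 N y); lra.
  rewrite big_split /= sumr_const -big_distrr /=.
  apply: lerD; first by rewrite mulr_natl.
  apply: ler_wpM2l => //.
  apply: le_trans Xd; apply: le_trans (_ : \sum_(y : X) d <= _).
    by apply: ler_sum => y _; exact: HN.
  by rewrite sumr_const mulr_natl.
have H2 : Sm <= 2 * (#|X|%:R * N%:R) by lra.
apply: le_trans H2; apply: le_sum1 => y; exact: T1_ge0.
Qed.


Lemma T_abs c K m x : (forall x a y, `|c x a y| <= K) -> `|tobj c m x| <= K * T1 m x.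
Proof.
move=> HK; elim: m x => [|m IH] x; first by rewrite !T_0 normr0 mulr0.
case: (boolP (x \in X0)) => hx; first by rewrite !T_in // normr0 mulr0.
rewrite !T_S // -avgZ; apply: le_trans (avg_norm _ _) _.
apply: avg_le => a y /=; rewrite mulrDr mulr1.
by apply: le_trans (ler_normD _ _) _; apply: lerD.
Qed.

Lemma value_bellman c : unif_term ->
  (forall x, x \in X0 -> limn (fun n => tobj c n x) = 0) /\
  (forall x, x \notin X0 -> limn (fun n => tobj c n x) =
     avg (fun a y => c x a y + limn (fun n => tobj c n y)) x).
Proof.
move=> ut.
pose K := \sum_x \sum_a \sum_y `|c x a y|.
have HK : forall x a y, `|c x a y| <= K.
  move=> x a y; rewrite /K; apply: le_trans (_ : \sum_a \sum_y `|c x a y| <= _); last first.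
    apply: (@le_sum1g X (fun x => \sum_a \sum_y `|c x a y|) x) => z.
    by apply: sumr_ge0 => b _; apply: sumr_ge0 => w _.
  apply: le_trans (_ : \sum_y `|c x a y| <= _); last first.
    apply: (@le_sum1g A (fun a => \sum_y `|c x a y|) a) => z.
    by apply: sumr_ge0 => w _.
  by apply: (@le_sum1g X (fun y => `|c x a y|) y) => z.
have K0 : 0 <= K.
  by apply: sumr_ge0 => x _; apply: sumr_ge0 => a _; apply: sumr_ge0 => y _.
have [C [C0 HC]] := T1_bound ut.
pose B := K * C.
have B0 : 0 <= B by rewrite mulr_ge0.
have HB : forall m y, `|tobj c m y| <= B.
  move=> m y; apply: le_trans (T_abs c K m y HK) _; exact: ler_wpM2l.
pose e n := B * \sum_y S n y.
have Hdiff : forall n m x, `|tobj c (n + m) x - tobj c n x| <= e n.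
  move=> n m x; apply: le_trans (T_diff c n m B x (HB m)) _.
  by apply: ler_wpM2l => //; apply: le_sum1 => z; exact: S_ge0.
have He : forall eps, 0 < eps -> exists N, e N < eps.
  move=> eps eps0.
  pose P := B * #|X|%:R.
  have P0 : 0 <= P by rewrite mulr_ge0.
  have d0 : 0 < eps / (P + 1) by rewrite divr_gt0 // ltr_wpDl.
  have [N HN] := ut _ d0; exists N.
  apply: le_lt_trans (_ : P * (eps / (P + 1)) < _); last first.
    rewrite mulrA ltr_pdivrMr ?ltr_wpDl //; nra.
  rewrite /e /P -mulrA; apply: ler_wpM2l => //.
  apply: le_trans (_ : \sum_(y : X) (eps / (P + 1)) <= _).
    by apply: ler_sum => y _; exact: HN.
  by rewrite sumr_const mulr_natl.
have emono : forall n, e n.+1 <= e n.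
  move=> n; apply: ler_wpM2l => //; apply: ler_sum => y _.
  by rewrite -addn1; exact: S_mono.
have e0 : forall n, 0 <= e n.
  by move=> n; apply: mulr_ge0 => //; apply: sumr_ge0 => y _; exact: S_ge0.
have Hlim : forall x n, `|limn (fun n => tobj c n x) - tobj c n x| <= e n.
  move=> x n; have [_ H] := @cvg_from_bound R (fun n => tobj c n x) e (fun n m => Hdiff n m x) He; exact: H.
split.
  move=> x hx; apply: (@zero_of_bound R e _ He) => n.
  have := Hlim x n; rewrite T_in // subr0 => h; have := e0 n; lra.
move=> x hx; apply/eqP; rewrite -subr_eq0; apply/eqP.
apply: (@zero_of_bound R e _ He) => n.
have h1 := Hlim x n.+1; rewrite T_S // in h1.
have h2 : `|avg (fun a y => c x a y + tobj c n y) x -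
            avg (fun a y => c x a y + limn (fun n => tobj c n y)) x| <= e n.
  rewrite -avgB; apply: le_trans (avg_norm _ _) _.
  rewrite -(avg_cst (e n) x); apply: avg_le => a y /=.
  by rewrite opprD addrACA subrr add0r distrC.
have := ler_normD (limn (fun n => tobj c n x) - avg (fun a y => c x a y + tobj c n y) x)
  (avg (fun a y => c x a y + tobj c n y) x - avg (fun a y => c x a y + limn (fun n => tobj c n y)) x).
rewrite addrA subrK => h3; have := emono n; lra.
Qed.

Lemma compare (D : X -> R) : unif_term ->
  (forall x, x \in X0 -> D x <= 0) ->
  (forall x, x \notin X0 -> D x <= avg (fun _ y => D y) x) -> forall x, D x <= 0.
Proof.
move=> ut H0 H1 x.
pose M := \sum_y `|D y|.
have M0 : 0 <= M by apply: sumr_ge0 => y _.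
have HM : forall n x, D x <= M * S n x.
  elim=> [|n IH] z; case: (boolP (z \in X0)) => hz.
  - by rewrite S_in // mulr0; exact: H0.
  - rewrite S_0 // mulr1; apply: le_trans (ler_norm _) _.
    by apply: (@le_sum1 (fun y => `|D y|)) => w.
  - by rewrite S_in // mulr0; exact: H0.
  rewrite S_S // -avgZ; apply: le_trans (H1 _ hz) _; exact: avg_le.
apply: contraT; rewrite -ltNge => Dx.
have d0 : 0 < D x / (M + 1) by rewrite divr_gt0 // ltr_wpDl.
have [N HN] := ut _ d0.
have h1 := HM N x.
have h2 : M * S N x <= M * (D x / (M + 1)) by apply: ler_wpM2l.
have h3 : M * (D x / (M + 1)) < D x.
  rewrite mulrA ltr_pdivrMr ?ltr_wpDl //; nra.
lra.
Qed.

Lemma term_unif : terminates X0 qc qd -> unif_term.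
Proof.
move=> ht d d0.
have H : \forall n \near \oo, forall y, S n y <= d.
  apply: filter_forall => y.
  have := ht y; move/cvgrPdist_le => /(_ d d0).
  apply: filterS => n; rewrite sub0r normrN ger0_norm //; exact: S_ge0.
case: H => N _ HN; exists N; apply: HN => /=; exact: leqnn.
Qed.

Lemma unif_term_terminates : unif_term -> terminates X0 qc qd.
Proof.
move=> ut x; apply/cvgrPdist_le => eps eps0.
have [N HN] := ut _ eps0.
exists N => // n /= Nn; rewrite sub0r normrN ger0_norm ?S_ge0 //.
apply: le_trans (HN x); exact: S_mono'.
Qed.

Lemma geo_unif N rho : 0 <= rho < 1 -> (forall y, S N y <= rho) -> unif_term.
Proof.
move=> /andP[r0 r1] H d d0.
have := @cvg_expr R rho; rewrite ger0_norm // => /(_ r1).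
move/cvgrPdist_le => /(_ d d0) [K _ HK].
exists (K * N)%N => y; apply: le_trans (S_geom N rho K y H) _.
have := HK K (leqnn K); rewrite sub0r normrN ger0_norm //; exact: exprn_ge0.
Qed.
End Gen.

Arguments avg {R X A}.
Arguments tobj {R X A}.
Arguments w_ge0 {R X A}.
Arguments avg_le {R X A}.
Arguments avg_cst {R X A}.
Arguments avgD {R X A}.
Arguments avgN {R X A}.
Arguments avgB {R X A}.
Arguments avgZ {R X A}.
Arguments S_in {R X A}.
Arguments S_0 {R X A}.
Arguments S_S {R X A}.
Arguments S_ge0 {R X A}.
Arguments S_le1 {R X A}.
Arguments unif_term {R X A}.
Arguments value_bellman {R X A}.
Arguments compare {R X A}.
Arguments term_unif {R X A}.
Arguments unif_term_terminates {R X A}.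
Arguments geo_unif {R X A}.

Lemma absorb_cmp (R : realType) (X A : finType) (X0 : {set X})
  (qc : X -> A -> R) (qd1 qd2 : X -> A -> X -> R) (m : R) :
  is_policy qc -> is_kernel qd1 -> is_kernel qd2 -> 0 <= m <= 1 ->
  (forall x a y, m * qd2 x a y <= qd1 x a y) ->
  forall n x, m ^+ n * (1 - survival X0 qc qd2 n x) <= 1 - survival X0 qc qd1 n x.
Proof.
move=> hc h1 h2 /andP[m0 m1] Hm; elim=> [|n IH] x; case: (boolP (x \in X0)) => hx.
- by rewrite !S_in // expr0 mul1r.
- by rewrite !S_0 // subrr mulr0.
- by rewrite !S_in // subr0 mulr1 exprn_ile1.
rewrite !S_S // -{1}(avg_cst qc qd2 hc h2 1 x) -{2}(avg_cst qc qd1 hc h1 1 x).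
rewrite -!avgB -avgZ.
apply: le_trans (_ : avg qc qd1 (fun _ y => m ^+ n * (1 - survival X0 qc qd2 n y)) x <= _);
  last by apply: (avg_le _ _ hc h1) => a y; exact: IH.
rewrite /avg; apply: ler_sum => a _; apply: ler_sum => y _.
have sy : 0 <= 1 - survival X0 qc qd2 n y by rewrite subr_ge0 S_le1.
have qca : 0 <= qc x a by case: (hc x).
have q2 : 0 <= qd2 x a y by case: (h2 x a).
rewrite exprS -!mulrA; apply: ler_wpM2l => //.
rewrite mulrCA mulrA; apply: ler_wpM2r; first by rewrite mulr_ge0 // exprn_ge0.
exact: Hm.
Qed.

Lemma gibbs (R : realType) (A X : finType) (w t : A -> X -> R) :
  (forall a y, 0 <= w a y) -> (forall a y, 0 <= t a y) ->
  \sum_a \sum_y w a y = 1 -> \sum_a \sum_y t a y = 1 ->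
  (forall a y, 0 < w a y -> 0 < t a y) ->
  \sum_a \sum_y w a y * ln (t a y / w a y) <= 0 /\
  (\sum_a \sum_y w a y * ln (t a y / w a y) = 0 -> forall a y, w a y = t a y).
Proof.
move=> w0 t0 sw st wt.
pose f a y := (t a y - w a y) - w a y * ln (t a y / w a y).
have f0 : forall a y, 0 <= f a y.
  move=> a y; rewrite /f; have [wz|wp] := eqVneq (w a y) 0.
    by rewrite wz mul0r subr0 subr0.
  have wp' : 0 < w a y by rewrite lt_def wp w0.
  have tp := wt _ _ wp'.
  have q0 : 0 < t a y / w a y by rewrite divr_gt0.
  have := expR_ge1Dx (ln (t a y / w a y)); rewrite lnK // => h.
  have : w a y * (1 + ln (t a y / w a y)) <= w a y * (t a y / w a y) by apply: ler_wpM2l.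
  rewrite mulrCA divff // mulr1; lra.
have sf : \sum_a \sum_y f a y = - \sum_a \sum_y w a y * ln (t a y / w a y).
  rewrite /f; under eq_bigr => a _ do rewrite !sumrB.
  by rewrite !sumrB st sw subrr sub0r.
have sf0 : 0 <= \sum_a \sum_y f a y by apply: sumr_ge0 => a _; apply: sumr_ge0.
split; first by move: sf0; rewrite sf oppr_ge0.
move=> h0 a y.
have fz : f a y = 0.
  move: sf; rewrite h0 oppr0 => /eqP; rewrite psumr_eq0 => [/allP H|]; last first.
    by move=> b _; apply: sumr_ge0.
  have := H a (mem_index_enum a); rewrite psumr_eq0 => [/allP H'|]; last by [].
  by apply/eqP; exact: (H' y (mem_index_enum y)).
move: fz; rewrite /f; have [wz|wp] := eqVneq (w a y) 0.
  by rewrite wz mul0r !subr0 => ->.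
have wp' : 0 < w a y by rewrite lt_def wp w0.
have tp := wt _ _ wp'.
have q0 : 0 < t a y / w a y by rewrite divr_gt0.
have [q1|q1] := eqVneq (t a y / w a y) 1.
  by move=> _; rewrite -[t a y](divfK wp) q1 mul1r.
have h : 1 + ln (t a y / w a y) < expR (ln (t a y / w a y)).
  by apply: expR_gt1Dx; rewrite ln_eq0.
rewrite lnK // in h.
have : w a y * (1 + ln (t a y / w a y)) < w a y * (t a y / w a y) by rewrite ltr_pM2l.
rewrite mulrCA divff // mulr1; lra.
Qed.

Lemma pos_wsum (R : realType) (I : finType) (w g : I -> R) :
  (forall i, 0 <= w i) -> \sum_i w i = 1 -> (forall i, 0 < g i) -> 0 < \sum_i w i * g i.
Proof.
move=> w0 sw g0; rewrite lt_neqAle; apply/andP; split; last first.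
  by apply: sumr_ge0 => i _; rewrite mulr_ge0 // ltW.
rewrite eq_sym psumr_eq0; last by move=> i _; rewrite mulr_ge0 // ltW.
apply/negP => /allP H.
have : \sum_i w i = 0.
  apply: big1 => i _; have := H i (mem_index_enum i); rewrite mulf_eq0 => /orP[/eqP //|].
  by rewrite gt_eqF.
by rewrite sw => /eqP; rewrite oner_eq0.
Qed.

Section Main.
Variables (R : realType) (X A : finType) (X0 : {set X}).
Variables (p : X -> A -> X -> R) (pi : X -> A -> R) (r : X -> A -> R) (eta : R).
Hypotheses (hp : is_kernel p) (hpi : is_policy pi).

Definition c_of (qc : X -> A -> R) (qd : X -> A -> X -> R) :=
  fun x a y => eta * r x a - ln (qc x a / pi x a) - ln (qd x a y / p x a y).

Lemma trunc_tobj qc qd n x :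
  trunc_obj X0 p pi r eta qc qd n x = tobj X0 qc qd (c_of qc qd) n x.
Proof.
elim: n x => [|n IH] x //=; case: ifP => // _.
by apply: eq_bigr => a _; apply: eq_bigr => y _; rewrite IH.
Qed.

Lemma obj_bellman qc qd : admissible X0 p pi qc qd ->
  (forall x, x \in X0 -> estep_obj X0 p pi r eta qc qd x = 0) /\
  (forall x, x \notin X0 -> estep_obj X0 p pi r eta qc qd x =
     avg qc qd (fun a y => c_of qc qd x a y + estep_obj X0 p pi r eta qc qd y) x).
Proof.
case=> hc hd _ _ ht.
have E : forall x, estep_obj X0 p pi r eta qc qd x = limn (fun n => tobj X0 qc qd (c_of qc qd) n x).
  move=> x; rewrite /estep_obj.
  by have -> : (fun n => trunc_obj X0 p pi r eta qc qd n x) = (fun n => tobj X0 qc qd (c_of qc qd) n x)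
    by apply: funext => n; exact: trunc_tobj.
have [H0 H1] := value_bellman X0 qc qd hc hd (c_of qc qd) (term_unif X0 qc qd hc hd ht).
split => x hx; rewrite !E; first exact: H0.
rewrite H1 //; apply: eq_bigr => a _; apply: eq_bigr => y _; by rewrite E.
Qed.


Lemma lnM' {a b : R} : 0 < a -> 0 < b -> ln (a * b) = ln a + ln b.
Proof. by move=> ha hb; apply: lnM; rewrite posrE. Qed.

Lemma lnD' {a b : R} : 0 < a -> 0 < b -> ln (a / b) = ln a - ln b.
Proof. by move=> ha hb; apply: ln_div; rewrite posrE. Qed.

Lemma avg_eq_pos (qc : X -> A -> R) (qd : X -> A -> X -> R) (F G : A -> X -> R) x :
  is_policy qc -> is_kernel qd ->
  (forall a y, 0 < qc x a * qd x a y -> F a y = G a y) -> avg qc qd F x = avg qc qd G x.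
Proof.
move=> hc hd H; rewrite /avg; apply: eq_bigr => a _; apply: eq_bigr => y _.
have [w0|wn] := eqVneq (qc x a * qd x a y) 0; first by rewrite w0 !mul0r.
by rewrite H // lt_def wn (w_ge0 qc qd hc hd).
Qed.

Section Gibbs.
Variable V : X -> R.
Definition Za x a := \sum_y p x a y * expR (V y).
Definition Qf x a := eta * r x a + ln (Za x a).
Definition Zx x := \sum_a pi x a * expR (Qf x a).
Definition qcg x a := pi x a * expR (Qf x a) / Zx x.
Definition qdg x a y := p x a y * expR (V y) / Za x a.

Lemma Za_gt0 x a : 0 < Za x a.
Proof. by apply: pos_wsum; [case: (hp x a) | case: (hp x a) | move=> y; exact: expR_gt0]. Qed.

Lemma Zx_gt0 x : 0 < Zx x.
Proof. by apply: pos_wsum; [case: (hpi x) | case: (hpi x) | move=> y; exact: expR_gt0]. Qed.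

Lemma expQ x a : expR (Qf x a) = expR (eta * r x a) * Za x a.
Proof. by rewrite /Qf expRD lnK // posrE Za_gt0. Qed.

Lemma qcg_policy : is_policy qcg.
Proof.
move=> x; split.
  move=> a; apply: divr_ge0; last exact: ltW (Zx_gt0 x).
  by apply: mulr_ge0; [case: (hpi x) => h _; exact: h | exact: expR_ge0].
by rewrite /qcg -big_distrl /= -/(Zx x) divff // gt_eqF // Zx_gt0.
Qed.

Lemma qdg_kernel : is_kernel qdg.
Proof.
move=> x a; split.
  move=> y; apply: divr_ge0; last exact: ltW (Za_gt0 x a).
  by apply: mulr_ge0; [case: (hp x a) => h _; exact: h | exact: expR_ge0].
by rewrite /qdg -big_distrl /= -/(Za x a) divff // gt_eqF // Za_gt0.
Qed.

Lemma qcg_pos x a : 0 < qcg x a -> 0 < pi x a.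
Proof.
move=> h; have : pi x a != 0 by apply: contraTneq h => e; rewrite /qcg e !mul0r ltxx.
by move=> ne; rewrite lt_def ne; case: (hpi x) => h0 _; exact: h0.
Qed.

Lemma qdg_pos x a y : 0 < qdg x a y -> 0 < p x a y.
Proof.
move=> h; have : p x a y != 0 by apply: contraTneq h => e; rewrite /qdg e !mul0r ltxx.
by move=> ne; rewrite lt_def ne; case: (hp x a) => h0 _; exact: h0.
Qed.

Lemma pi_qcg x a : 0 < pi x a -> 0 < qcg x a.
Proof. by move=> h; rewrite /qcg divr_gt0 ?mulr_gt0 ?expR_gt0 ?Zx_gt0. Qed.

Lemma p_qdg x a y : 0 < p x a y -> 0 < qdg x a y.
Proof. by move=> h; rewrite /qdg divr_gt0 ?mulr_gt0 ?expR_gt0 ?Za_gt0. Qed.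

Lemma gibbs_id qc qd x : x \notin X0 -> is_policy qc -> is_kernel qd ->
  (forall a, 0 < qc x a -> 0 < pi x a) ->
  (forall a y, 0 < qc x a -> 0 < qd x a y -> 0 < p x a y) ->
  avg qc qd (fun a y => c_of qc qd x a y + V y) x =
  ln (Zx x) + \sum_a \sum_y qc x a * qd x a y *
     ln (qcg x a * qdg x a y / (qc x a * qd x a y)).
Proof.
move=> hx hc hd hpc hpd.
rewrite -{1}(avg_cst qc qd hc hd (ln (Zx x)) x) -avgD.
apply: (avg_eq_pos _ _ _ _ _ hc hd) => a y wpos.
have qc0 : 0 <= qc x a by case: (hc x).
have qd0 : 0 <= qd x a y by case: (hd x a).
have qcp : 0 < qc x a.
  rewrite lt_def qc0 andbT; apply: contraTneq wpos => ->; by rewrite mul0r ltxx.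
have qdp : 0 < qd x a y.
  rewrite lt_def qd0 andbT; apply: contraTneq wpos => ->; by rewrite mulr0 ltxx.
have pip := hpc a qcp.
have pp := hpd a y qcp qdp.
have Zap := Za_gt0 x a.
have Zxp := Zx_gt0 x.
have qcgp : 0 < qcg x a by rewrite /qcg divr_gt0 ?mulr_gt0 ?expR_gt0.
have qdgp : 0 < qdg x a y by rewrite /qdg divr_gt0 ?mulr_gt0 ?expR_gt0.
have h1 : ln (qc x a / pi x a) = ln (qc x a) - ln (pi x a) by exact: lnD'.
have h2 : ln (qd x a y / p x a y) = ln (qd x a y) - ln (p x a y) by exact: lnD'.
have h3 : ln (qcg x a * qdg x a y / (qc x a * qd x a y)) =
    ln (qcg x a) + ln (qdg x a y) - (ln (qc x a) + ln (qd x a y)).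
  by rewrite (lnD' (mulr_gt0 qcgp qdgp) (mulr_gt0 qcp qdp)) (lnM' qcgp qdgp) (lnM' qcp qdp).
have h4 : ln (qcg x a) = ln (pi x a) + (eta * r x a + ln (Za x a)) - ln (Zx x).
  by rewrite /qcg (lnD' (mulr_gt0 pip (expR_gt0 _)) Zxp) (lnM' pip (expR_gt0 _)) expRK.
have h5 : ln (qdg x a y) = ln (p x a y) + V y - ln (Za x a).
  by rewrite /qdg (lnD' (mulr_gt0 pp (expR_gt0 _)) Zap) (lnM' pp (expR_gt0 _)) expRK.
rewrite /c_of h1 h2 h3 h4 h5; lra.
Qed.

End Gibbs.

Lemma wsum1 (qc : X -> A -> R) (qd : X -> A -> X -> R) x :
  is_policy qc -> is_kernel qd -> \sum_a \sum_y qc x a * qd x a y = 1.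
Proof.
move=> hc hd; have := avg_cst qc qd hc hd 1 x; rewrite /avg => <-.
by apply: eq_bigr => a _; apply: eq_bigr => y _; rewrite mulr1.
Qed.

Lemma main_result (qcs : X -> A -> R) (qds : X -> A -> X -> R) :
  (forall qc, is_policy qc -> terminates X0 qc p) ->
  estep_optimal X0 p pi r eta qcs qds ->
  let V := estep_obj X0 p pi r eta qcs qds in
  [/\ (forall x a y, x \notin X0 -> 0 < pi x a -> qds x a y = qdg V x a y),
      (forall x a, x \notin X0 -> qcs x a = qcg V x a) &
      (forall x, x \notin X0 -> V x = ln (Zx V x))].
Proof.
move=> hterm [hadm hmax] V.
have [hc hd hpc hpd ht] := hadm.
have [V0 Vb] := @obj_bellman qcs qds hadm.
have {V0}V0 : forall x, x \in X0 -> V x = 0 := V0.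
have {Vb}Vb : forall x, x \notin X0 ->
  V x = avg qcs qds (fun a y => c_of qcs qds x a y + V y) x := Vb.
pose qc' := qcg V; pose qd' := qdg V.
have hcg : is_policy qc' := qcg_policy V.
have hdg : is_kernel qd' := qdg_kernel V.
have ut_p := term_unif X0 qc' p hcg hp (hterm _ hcg).
have [N HN] := ut_p (2^-1) ltac:(by rewrite invr_gt0).
pose L := \sum_y `|V y|.
pose m := expR (- (L + L)).
have VL : forall y, `|V y| <= L.
  by move=> y; apply: (@le_sum1g R X (fun y => `|V y|) y) => z.
have m0 : 0 < m by exact: expR_gt0.
have m1 : m <= 1.
  by rewrite /m expR_le1 oppr_le0; apply: addr_ge0; apply: sumr_ge0 => z _.
have Hm : forall x a y, m * p x a y <= qd' x a y.
  move=> x a y; rewrite /qd' /qdg -mulrA mulrC; apply: ler_wpM2l.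
    by case: (hp x a) => h0 _; exact: h0.
  rewrite ler_pdivlMr ?Za_gt0 //.
  have ZL : Za V x a <= expR L.
    rewrite /Za; apply: le_trans (_ : \sum_y p x a y * expR L <= _).
      apply: ler_sum => z _; apply: ler_wpM2l; first by case: (hp x a) => h0 _; exact: h0.
      by rewrite ler_expR; apply: le_trans (ler_norm _) (VL z).
    by rewrite -big_distrl /=; case: (hp x a) => _ ->; rewrite mul1r.
  apply: le_trans (_ : m * expR L <= _); first by apply: ler_wpM2l => //; exact: ltW.
  rewrite /m -expRD ler_expR; have := VL y; rewrite ler_norml => /andP[h _]; lra.
have absorb := @absorb_cmp R X A X0 qc' qd' p m hcg hdg hp (ltac:(by rewrite (ltW m0) m1)) Hm N.
pose rho := 1 - m ^+ N / 2.
have mN0 : 0 < m ^+ N by exact: exprn_gt0.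
have mN1 : m ^+ N <= 1 by rewrite exprn_ile1 // ltW.
have rho01 : 0 <= rho < 1 by apply/andP; split; rewrite /rho; lra.
have HSg : forall y, survival X0 qc' qd' N y <= rho.
  move=> y; have := absorb y; have := HN y.
  have := S_ge0 X0 qc' p hcg hp N y; rewrite /rho => h1 h2 h3; nra.
have ut_g := geo_unif X0 qc' qd' hcg hdg N rho rho01 HSg.
have hadmg : admissible X0 p pi qc' qd'.
  split => //.
  - by move=> x a _; exact: qcg_pos.
  - by move=> x a y _ _; exact: qdg_pos.
  - exact: unif_term_terminates.
pose Vg := estep_obj X0 p pi r eta qc' qd'.
have [Vg0 Vgb] := @obj_bellman qc' qd' hadmg.
have {Vg0}Vg0 : forall x, x \in X0 -> Vg x = 0 := Vg0.
have {Vgb}Vgb : forall x, x \notin X0 ->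
  Vg x = avg qc' qd' (fun a y => c_of qc' qd' x a y + Vg y) x := Vgb.
have hle : forall x, Vg x <= V x := hmax _ _ hadmg.
pose Gs x := \sum_a \sum_y qcs x a * qds x a y *
     ln (qc' x a * qd' x a y / (qcs x a * qds x a y)).
have GS : forall x, x \notin X0 ->
    avg qcs qds (fun a y => c_of qcs qds x a y + V y) x = ln (Zx V x) + Gs x.
  move=> x hx; apply: gibbs_id => //.
  - by move=> a; exact: hpc.
  - by move=> a y; exact: hpd.
have GG : forall x, x \notin X0 ->
    avg qc' qd' (fun a y => c_of qc' qd' x a y + V y) x = ln (Zx V x).
  move=> x hx; rewrite gibbs_id //.
  - rewrite big1 ?addr0 // => a _; rewrite big1 // => y _.
    have [t0|tn] := eqVneq (qc' x a * qd' x a y) 0; first by rewrite t0 mul0r.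
    by rewrite divff // ln1 mulr0.
  - by move=> a h; exact: qcg_pos h.
  - by move=> a y _ h; exact: qdg_pos h.
have GI : forall x, x \notin X0 -> Gs x <= 0 /\ (Gs x = 0 ->
    forall a y, qcs x a * qds x a y = qc' x a * qd' x a y).
  move=> x hx; apply: gibbs.
  - by move=> a y; exact: w_ge0.
  - by move=> a y; exact: (w_ge0 qc' qd').
  - exact: wsum1.
  - exact: wsum1.
  move=> a y wp.
  have qc0 : 0 <= qcs x a by case: (hc x).
  have qd0 : 0 <= qds x a y by case: (hd x a).
  have qcp : 0 < qcs x a.
    rewrite lt_def qc0 andbT; apply: contraTneq wp => ->; by rewrite mul0r ltxx.
  have qdp : 0 < qds x a y.
    rewrite lt_def qd0 andbT; apply: contraTneq wp => ->; by rewrite mulr0 ltxx.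
  by rewrite mulr_gt0 // ?pi_qcg ?p_qdg //; [exact: hpc | exact: hpd].
have HE : forall x, V x - Vg x <= 0.
  apply: (compare X0 qc' qd' hcg hdg _ ut_g).
    by move=> x hx /=; rewrite V0 // Vg0 // subrr.
  move=> x hx /=; rewrite Vb // Vgb // GS //.
  have [g0 _] := GI x hx.
  apply: le_trans (_ : ln (Zx V x) - avg qc' qd' (fun a y => c_of qc' qd' x a y + Vg y) x <= _).
    by rewrite lerD2r; lra.
  rewrite -GG // -avgB; apply: (avg_le qc' qd' hcg hdg) => a y /=.
  by rewrite opprD addrACA subrr add0r.
have VVg : Vg = V.
  apply: funext => x; apply/eqP; rewrite eq_le hle /=; have := HE x; lra.
have VZ : forall x, x \notin X0 -> V x = ln (Zx V x).
  move=> x hx; rewrite -{1}VVg Vgb // -GG //; congr avg.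
  by apply: funext => a; apply: funext => y; rewrite VVg.
have Weq : forall x, x \notin X0 -> forall a y, qcs x a * qds x a y = qc' x a * qd' x a y.
  move=> x hx; have [_ H] := GI x hx; apply: H.
  have := GS x hx; rewrite -Vb // -VZ //; lra.
have Ceq : forall x a, x \notin X0 -> qcs x a = qcg V x a.
  move=> x a hx.
  have e1 : qcs x a = \sum_y qcs x a * qds x a y.
    by rewrite -big_distrr /=; case: (hd x a) => _ ->; rewrite mulr1.
  have e2 : qc' x a = \sum_y qc' x a * qd' x a y.
    by rewrite -big_distrr /=; case: (hdg x a) => _ ->; rewrite mulr1.
  rewrite e1 -/(qc' x a) e2; apply: eq_bigr => y _; exact: Weq.
split => //.
move=> x a y hx pip.
have cp : 0 < qc' x a by exact: pi_qcg.
have := Weq x hx a y; rewrite Ceq // -/(qc' x a) => /mulfI; apply.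
by rewrite gt_eqF.
Qed.
End Main.

Theorem mainTheorem5 (R : realType) (X A : finType) (X0 : {set X})
  (p : X -> A -> X -> R) (pi : X -> A -> R) (r : X -> A -> R) (eta : R) :
  0 < eta ->
  is_kernel p ->
  is_policy pi ->
  (forall qc : X -> A -> R, is_policy qc -> terminates X0 qc p) ->
  forall (qcs : X -> A -> R) (qds : X -> A -> X -> R),
  estep_optimal X0 p pi r eta qcs qds ->
  let V := estep_obj X0 p pi r eta qcs qds in
  let Q := fun x a => eta * r x a + ln (\sum_(x' : X) p x a x' * expR (V x')) in
  (forall x a x', x \notin X0 -> 0 < pi x a ->
     qds x a x' = p x a x' * expR (V x') / expR (Q x a - eta * r x a)) /\
  (forall x a, x \notin X0 ->
     qcs x a = pi x a * expR (Q x a) / expR (V x)).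
Proof.
move=> _ hp hpi hterm qcs qds hopt V Q.
have [H1 H2 H3] := @main_result R X A X0 p pi r eta hp hpi qcs qds hterm hopt.
split.
  move=> x a y hx pip; rewrite H1 // /qdg.
  have -> : Q x a - eta * r x a = ln (Za R X A p V x a) by rewrite /Q addrAC subrr add0r.
  by rewrite lnK // posrE (@Za_gt0 R X A p hp V x a).
move=> x a hx; rewrite H2 // /qcg.
have e : V x = ln (Zx R X A p pi r eta V x) := H3 x hx.
by rewrite e lnK // posrE (@Zx_gt0 R X A p pi r eta hpi V x).
Qed.
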